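(* A convex $a^2bc$-quadrilateral on the sphere (all angles $<\pi$) satisfies $\alpha+2\beta>\pi$ and $\alpha+2\gamma>\pi$.
   Context: An $a^2bc$-quadrilateral has edges $a,a,b,c$ in cyclic order with $a,b,c$ pairwise distinct; $\alpha$ = angle between the two $a$-edges; $\beta$ = angle between an $a$-edge and the $b$-edge; $\delta$ = angle between the $b$-edge and the $c$-edge; $\gamma$ = angle between the $c$-edge and the other $a$-edge. *)

(* Defs.v *)
From Stdlib Require Import Reals.
Open Scope R_scope.

Record vec3 := V3 { vx : R; vy : R; vz : R }.

Definition dot (u v : vec3) : R := vx u * vx v + vy u * vy v + vz u * vz v.

Definition cross (u v : vec3) : vec3 :=
  V3 (vy u * vz v - vz u * vy v)
     (vz u * vx v - vx u * vz v)
     (vx u * vy v - vy u * vx v).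

Definition norm (u : vec3) : R := sqrt (dot u u).

Definition det3 (u v w : vec3) : R := dot (cross u v) w.

Definition on_sphere (u : vec3) : Prop := dot u u = 1.

Definition sdist (u v : vec3) : R := acos (dot u v).

(* the angle at vertex v between the great arcs v->p and v->q:
   the angle between the planes spanned by (v,p) and (v,q), i.e. between
   the tangent directions at v of the two arcs *)
Definition sangle (v p q : vec3) : R :=
  acos (dot (cross v p) (cross v q) / (norm (cross v p) * norm (cross v q))).

(* The spherical quadrilateral V0 V1 V2 V3 (edges = minor great arcs
   V0V1, V1V2, V2V3, V3V0) is convex with all angles < pi:
   for each edge, the two remaining vertices lie strictly on the same
   (left, for the positive orientation) side of the great circle of that edge. *)
Definition convex_quad_pos (V0 V1 V2 V3 : vec3) : Prop :=
  0 < det3 V0 V1 V2 /\ 0 < det3 V0 V1 V3 /\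
  0 < det3 V1 V2 V3 /\ 0 < det3 V1 V2 V0 /\
  0 < det3 V2 V3 V0 /\ 0 < det3 V2 V3 V1 /\
  0 < det3 V3 V0 V1 /\ 0 < det3 V3 V0 V2.

Definition convex_quad (V0 V1 V2 V3 : vec3) : Prop :=
  on_sphere V0 /\ on_sphere V1 /\ on_sphere V2 /\ on_sphere V3 /\
  (convex_quad_pos V0 V1 V2 V3 \/ convex_quad_pos V0 V3 V2 V1).

(* Angles:
   alpha at V0 (between the two a-edges), beta at V1 (a-edge and b-edge),
   delta at V2 (b-edge and c-edge), gamma at V3 (c-edge and other a-edge). *)
Definition a2bc_quad (V0 V1 V2 V3 : vec3) (a b c : R) : Prop :=
  sdist V0 V1 = a /\ sdist V3 V0 = a /\ sdist V1 V2 = b /\ sdist V2 V3 = c /\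
  a <> b /\ b <> c /\ a <> c.

Definition alpha (V0 V1 V2 V3 : vec3) : R := sangle V0 V1 V3.
Definition beta  (V0 V1 V2 V3 : vec3) : R := sangle V1 V0 V2.
Definition delta (V0 V1 V2 V3 : vec3) : R := sangle V2 V1 V3.
Definition gamma (V0 V1 V2 V3 : vec3) : R := sangle V3 V2 V0.

(* Main.v *)
Require Import Defs.
From Stdlib Require Import Reals Lra Psatz.
Open Scope R_scope.

Lemma acos_gt c t : -1 <= c <= 1 -> 0 <= t <= PI -> c < cos t -> t < acos c.
Proof.
  intros Hc Ht H. pose proof (acos_bound c).
  apply cos_decreasing_0; try lra. rewrite cos_acos; lra.
Qed.

Lemma lagrange u v : dot (cross u v) (cross u v) = dot u u * dot v v - dot u v ^ 2.
Proof. destruct u, v; unfold dot, cross; simpl; ring. Qed.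

Lemma binet a b c d : dot (cross a b) (cross c d) = dot a c * dot b d - dot a d * dot b c.
Proof. destruct a, b, c, d; unfold dot, cross; simpl; ring. Qed.

Lemma crosscross b a d : cross (cross b a) (cross b d) =
  let k := det3 b a d in V3 (k * vx b) (k * vy b) (k * vz b).
Proof. destruct a, b, d; unfold det3, dot, cross; simpl; f_equal; ring. Qed.

Lemma dot_ge0 u : 0 <= dot u u.
Proof. destruct u; unfold dot; simpl; nra. Qed.

Lemma dot_pos u w : dot u w <> 0 -> 0 < dot u u.
Proof. destruct u, w; unfold dot; simpl; intros H.
  destruct (Rle_lt_or_eq_dec 0 (vx*vx+vy*vy+vz*vz)) as [h|h]; [nra|exact h|].
  exfalso; apply H. assert (vx=0) by nra. assert (vy=0) by nra. assert (vz=0) by nra. subst; ring. Qed.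

Lemma cs u w : dot u w ^ 2 <= dot u u * dot w w.
Proof. pose proof (lagrange u w); pose proof (dot_ge0 (cross u w)); lra. Qed.

Lemma norm_sq u : norm u * norm u = dot u u.
Proof. unfold norm; apply sqrt_sqrt, dot_ge0. Qed.

Lemma norm_ge0 u : 0 <= norm u.
Proof. unfold norm; apply sqrt_pos. Qed.

Lemma ratio_bound u w : 0 < dot u u -> 0 < dot w w ->
  -1 <= dot u w / (norm u * norm w) <= 1.
Proof. intros Hu Hw. pose proof (cs u w). pose proof (norm_sq u). pose proof (norm_sq w).
  pose proof (norm_ge0 u); pose proof (norm_ge0 w).
  assert (0 < norm u) by nra. assert (0 < norm w) by nra.
  assert (Hp: 0 < norm u * norm w) by nra.
  split.
  - apply Rmult_le_reg_r with (norm u * norm w); auto. unfold Rdiv; rewrite Rmult_assoc, Rinv_l by lra. nra.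
  - apply Rmult_le_reg_r with (norm u * norm w); auto. unfold Rdiv; rewrite Rmult_assoc, Rinv_l by lra. nra.
Qed.

Lemma keyn c1 c2 c3 : c1*c2 > c3 -> c1 > c3*c2 -> c2^2 < 1 -> c3 < c1.
Proof. intros H1 H2 H3.
  destruct (Rlt_or_le c3 c1) as [h|h]; auto. exfalso.
  assert (-1 < c2 < 1) by nra.
  destruct (Rle_or_lt 0 c2).
  - assert (c3*c2 >= c1*c2) by nra. assert (c1 > 0) by nra. nra.
  - assert (c1 < 0) by nra. assert (c3 > 0) by nra. nra.
Qed.
Lemma key2d P Q R a b : 0 < a -> 0 < b -> P * R - Q * a^2 > 0 -> P * b^2 - Q * R > 0 ->
  a^2 * b^2 - R^2 > 0 -> Q * a < P * b.
Proof. intros Ha Hb H1 H2 H3.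
  assert (Q/b < P/a).
  { apply (keyn (P/a) (R/(a*b)) (Q/b)).
    - assert (h: 0 < (P*R - Q*a^2)/(a^2*b)) by (apply Rdiv_lt_0_compat; nra).
      replace ((P*R - Q*a^2)/(a^2*b)) with (P / a * (R / (a * b)) - Q/b) in h by (field; lra). lra.
    - assert (h: 0 < (P*b^2 - Q*R)/(a*b^2)) by (apply Rdiv_lt_0_compat; nra).
      replace ((P*b^2 - Q*R)/(a*b^2)) with (P / a - Q/b * (R / (a * b))) in h by (field; lra). lra.
    - replace ((R/(a*b))^2) with (R^2/(a^2*b^2)) by (field; lra).
      apply Rmult_lt_reg_r with (a^2*b^2); [nra|]. unfold Rdiv; rewrite Rmult_assoc, Rinv_l; nra. }
  apply Rmult_lt_compat_r with (r := a*b) in H; [|nra].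
  replace (Q/b*(a*b)) with (Q*a) in H by (field; lra).
  replace (P/a*(a*b)) with (P*b) in H by (field; lra). exact H.
Qed.

Lemma dot_comm u v : dot u v = dot v u.
Proof. unfold dot; ring. Qed.

Lemma det_cyc a b c : det3 a b c = det3 b c a.
Proof. destruct a, b, c; unfold det3, dot, cross; simpl; ring. Qed.

Lemma det_swap a b c : det3 a b c = - det3 b a c.
Proof. destruct a, b, c; unfold det3, dot, cross; simpl; ring. Qed.

Lemma det_swap23 a b c : det3 a b c = - det3 a c b.
Proof. destruct a, b, c; unfold det3, dot, cross; simpl; ring. Qed.

Lemma cc_dot b a d a' d' :
  dot (cross (cross b a) (cross b d)) (cross (cross b a') (cross b d'))
  = det3 b a d * det3 b a' d' * dot b b.
Proof. destruct a, b, d, a', d'; unfold det3, dot, cross; simpl; ring. Qed.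

Definition ratio u w := dot u w / (norm u * norm w).

Lemma ratio_pos_den u w : 0 < dot u u -> 0 < dot w w -> 0 < norm u * norm w.
Proof. intros. pose proof (norm_sq u). pose proof (norm_sq w).
  pose proof (norm_ge0 u); pose proof (norm_ge0 w).
  assert (0 < norm u) by nra. assert (0 < norm w) by nra. nra. Qed.

Lemma norm_pos u : 0 < dot u u -> 0 < norm u.
Proof. intros. pose proof (norm_sq u). pose proof (norm_ge0 u). nra. Qed.

Lemma beta_gt_theta A B C D : dot B B = 1 ->
  det3 A B D * det3 B C D > 0 -> det3 A B C * det3 B C D > 0 ->
  ratio (cross B A) (cross B C) < ratio (cross B A) (cross B D).
Proof.
  intros HB H1 H2.
  set (u := cross B A). set (v := cross B D). set (w := cross B C).
  assert (Hu : 0 < dot u u).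
  { apply (dot_pos u D). unfold u. change (det3 B A D <> 0). rewrite det_swap. nra. }
  assert (Hv : 0 < dot v v).
  { apply (dot_pos v C). unfold v. change (det3 B D C <> 0). rewrite (det_swap23 B D C). nra. }
  assert (Hw : 0 < dot w w).
  { apply (dot_pos w A). unfold w. change (det3 B C A <> 0). rewrite <- (det_cyc A B C). nra. }
  assert (I1 : dot u v * dot v w - dot u w * dot v v > 0).
  { pose proof (binet u v v w) as E. unfold u, v, w in *.
    rewrite (crosscross B A D), (crosscross B D C) in E. simpl in E.
    pose proof (cc_dot B A D D C) as E2. rewrite crosscross, crosscross in E2. simpl in E2.
    rewrite E2, HB in E. rewrite (det_swap B A D), (det_swap23 B D C) in E.
    nra. }
  assert (I2 : dot u v * dot w w - dot u w * dot v w > 0).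
  { pose proof (binet u w v w) as E. unfold u, v, w in *.
    pose proof (cc_dot B A C D C) as E2. rewrite crosscross, crosscross in E2. simpl in E2.
    rewrite (crosscross B A C), (crosscross B D C) in E. simpl in E.
    rewrite E2, HB in E. rewrite (det_swap B A C), (det_swap23 B D C) in E.
    rewrite (dot_comm (cross B C) (cross B D)) in E. nra. }
  assert (I3 : dot v v * dot w w - dot v w ^ 2 > 0).
  { pose proof (lagrange v w) as E. unfold v, w in *.
    pose proof (cc_dot B D C D C) as E2. rewrite crosscross in E2. simpl in E2.
    rewrite (crosscross B D C) in E. simpl in E. rewrite E2, HB in E.
    rewrite (det_swap23 B D C) in E. nra. }
  pose proof (norm_sq v) as Nv. pose proof (norm_sq w) as Nw.
  pose proof (norm_pos v Hv). pose proof (norm_pos w Hw). pose proof (norm_pos u Hu).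
  assert (K : dot u w * norm v < dot u v * norm w).
  { apply (key2d (dot u v) (dot u w) (dot v w)); auto; simpl; rewrite ?Rmult_1_r, ?Nv, ?Nw; lra. }
  unfold ratio. fold u v w.
  apply Rmult_lt_reg_r with (norm u * norm v * norm w). { apply Rmult_lt_0_compat; [apply Rmult_lt_0_compat|]; auto. }
  replace (dot u w / (norm u * norm w) * (norm u * norm v * norm w)) with (dot u w * norm v) by (field; lra).
  replace (dot u v / (norm u * norm v) * (norm u * norm v * norm w)) with (dot u v * norm w) by (field; lra).
  exact K.
Qed.

Lemma strict_cs A B D : dot A A = 1 -> dot B B = 1 -> dot D D = 1 ->
  2 + 2 * dot B D - (dot A B + dot A D)^2 >= det3 A B D ^ 2.
Proof.
  intros HA HB HD.
  set (s := V3 (vx B + vx D) (vy B + vy D) (vz B + vz D)).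
  pose proof (lagrange A s) as L. pose proof (cs (cross A s) B) as C.
  assert (E1 : dot s s = dot B B + 2 * dot B D + dot D D) by (destruct B, D; unfold s, dot; simpl; ring).
  assert (E2 : dot A s = dot A B + dot A D) by (destruct A, B, D; unfold s, dot; simpl; ring).
  assert (E3 : dot (cross A s) B = - det3 A B D) by (destruct A, B, D; unfold s, det3, dot, cross; simpl; ring).
  rewrite E3, HB in C. rewrite E1, E2, HA, HB, HD in L. nra.
Qed.

Lemma sq_lt a b : 0 < b -> a^2 < b^2 -> a < b.
Proof. intros. nra. Qed.

Lemma isosceles A B D : dot A A = 1 -> dot B B = 1 -> dot D D = 1 ->
  dot A B = dot A D -> det3 A B D <> 0 ->
  (PI - acos (ratio (cross A B) (cross A D))) / 2 < acos (ratio (cross B A) (cross B D)).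
Proof.
  intros HA HB HD Hx Hk.
  set (x := dot A B). set (y := dot B D).
  assert (N1 : dot (cross B A) (cross B A) = 1 - x^2).
  { rewrite lagrange, HA, HB, dot_comm. fold x. ring. }
  assert (N2 : dot (cross B D) (cross B D) = 1 - y^2).
  { rewrite lagrange, HD, HB. fold y. ring. }
  assert (N3 : dot (cross A B) (cross A B) = 1 - x^2).
  { rewrite lagrange, HA, HB. fold x. ring. }
  assert (N4 : dot (cross A D) (cross A D) = 1 - x^2).
  { rewrite lagrange, HA, HD, <- Hx. fold x. ring. }
  assert (T : dot (cross B A) (cross B D) = x - y * x).
  { rewrite binet, HB, <- Hx. fold x y. ring. }
  assert (Al : dot (cross A B) (cross A D) = y - x^2).
  { rewrite binet, HA, <- Hx. rewrite (dot_comm B A). fold x y. ring. }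
  assert (P1 : 0 < dot (cross B A) (cross B A)).
  { apply (dot_pos _ D). change (det3 B A D <> 0). rewrite det_swap. lra. }
  assert (P2 : 0 < dot (cross B D) (cross B D)).
  { apply (dot_pos _ A). change (det3 B D A <> 0). rewrite <- (det_cyc A B D). lra. }
  assert (P3 : 0 < dot (cross A B) (cross A B)) by lra.
  assert (P4 : 0 < dot (cross A D) (cross A D)) by lra.
  pose proof (strict_cs A B D HA HB HD) as SC. rewrite <- Hx in SC. fold x y in SC.
  assert (Hk2 : det3 A B D ^ 2 > 0) by nra.
  assert (Nab : norm (cross A B) * norm (cross A D) = 1 - x^2).
  { assert (norm (cross A B) = norm (cross A D)) by (unfold norm; rewrite N3, N4; reflexivity).
    rewrite H, norm_sq. lra. }
  set (ca := ratio (cross A B) (cross A D)).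
  assert (Ca : ca * (1 - x^2) = y - x^2).
  { unfold ca, ratio. rewrite Nab, Al. field. lra. }
  pose proof (ratio_bound _ _ P3 P4) as Ba. change (-1 <= ca <= 1) in Ba.
  pose proof (acos_bound ca) as Bal.
  set (al := acos ca) in *.
  set (s := sin (al / 2)).
  assert (Hs0 : 0 <= s) by (apply sin_ge_0; lra).
  assert (Hs2 : 1 - 2 * s * s = ca).
  { unfold s. rewrite <- cos_2a_sin. replace (2 * (al/2)) with al by field. unfold al. apply cos_acos; lra. }
  pose proof (ratio_bound _ _ P1 P2) as Bt.
  apply acos_gt; auto. { pose proof PI_RGT_0; lra. }
  replace ((PI - al) / 2) with (PI/2 - al/2) by field. rewrite cos_shift. fold s.
  pose proof (norm_sq (cross B A)) as M1. pose proof (norm_sq (cross B D)) as M2.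
  pose proof (norm_pos _ P1) as Q1. pose proof (norm_pos _ P2) as Q2.
  set (n1 := norm (cross B A)) in *. set (n2 := norm (cross B D)) in *.
  unfold ratio. fold n1 n2. rewrite T.
  assert (Y : -1 < y < 1) by nra.
  assert (X : x^2 < 1) by nra.
  assert (Key : x - y * x < s * (n1 * n2)).
  { assert (Hq : (1 - ca) * (1 - x^2) = 1 - y) by nra.
    assert (S2 : s*s*(1-x^2) = (1-y)/2) by nra.
    destruct (Rle_or_lt x 0) as [hx|hx].
    - assert (s > 0).
      { destruct Hs0 as [h|h]; auto. rewrite <- h in S2. nra. }
      assert (0 < s * (n1 * n2)) by (apply Rmult_lt_0_compat; nra). nra.
    - apply sq_lt.
      + destruct Hs0 as [h|h].
        * apply Rmult_lt_0_compat; nra.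
        * rewrite <- h in S2. nra.
      + replace ((s * (n1 * n2))^2) with (s*s*(n1*n1) * (n2*n2)) by ring.
        rewrite M1, M2, N1, N2, S2. assert (Hp: (1-y)^2 * (2 + 2*y - 4*x^2) > 0) by (apply Rmult_lt_0_compat; nra). nra. }
  apply Rmult_lt_reg_r with (n1 * n2). nra.
  replace ((x - y * x) / (n1 * n2) * (n1 * n2)) with (x - y*x) by (field; lra). exact Key.
Qed.

Lemma sangle_ratio v p q : sangle v p q = acos (ratio (cross v p) (cross v q)).
Proof. reflexivity. Qed.

Lemma sangle_sym v p q : sangle v p q = sangle v q p.
Proof. unfold sangle. rewrite dot_comm, Rmult_comm. reflexivity. Qed.

Lemma M A B C D : dot A A = 1 -> dot B B = 1 -> dot C C = 1 -> dot D D = 1 ->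
  dot A B = dot A D ->
  det3 A B D * det3 B C D > 0 -> det3 A B C * det3 B C D > 0 ->
  sangle A B D + 2 * sangle B A C > PI.
Proof.
  intros HA HB HC HD Hx H1 H2.
  assert (Hk : det3 A B D <> 0) by (intro h; rewrite h in H1; lra).
  pose proof (isosceles A B D HA HB HD Hx Hk) as I.
  pose proof (beta_gt_theta A B C D HB H1 H2) as Bt.
  rewrite !sangle_ratio.
  assert (P1 : 0 < dot (cross B A) (cross B A)).
  { apply (dot_pos _ D). change (det3 B A D <> 0). rewrite det_swap. lra. }
  assert (P2 : 0 < dot (cross B D) (cross B D)).
  { apply (dot_pos _ A). change (det3 B D A <> 0). rewrite <- (det_cyc A B D). lra. }
  assert (P3 : 0 < dot (cross B C) (cross B C)).
  { apply (dot_pos _ A). change (det3 B C A <> 0). rewrite <- (det_cyc A B C). intro h; rewrite h in H2; lra. }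
  pose proof (ratio_bound _ _ P1 P2) as R1. pose proof (ratio_bound _ _ P1 P3) as R2.
  change (-1 <= ratio (cross B A) (cross B D) <= 1) in R1.
  change (-1 <= ratio (cross B A) (cross B C) <= 1) in R2.
  assert (acos (ratio (cross B A) (cross B D)) < acos (ratio (cross B A) (cross B C))).
  { apply acos_gt; auto. apply acos_bound. rewrite cos_acos; auto. }
  lra.
Qed.

Lemma dot_unit_bound u v : dot u u = 1 -> dot v v = 1 -> -1 <= dot u v <= 1.
Proof. intros Hu Hv. pose proof (cs u v). rewrite Hu, Hv in H. nra. Qed.

Theorem lemma5 (V0 V1 V2 V3 : vec3) (a b c : R) :
  convex_quad V0 V1 V2 V3 ->
  a2bc_quad V0 V1 V2 V3 a b c ->
  alpha V0 V1 V2 V3 + 2 * beta V0 V1 V2 V3 > PI /\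
  alpha V0 V1 V2 V3 + 2 * gamma V0 V1 V2 V3 > PI.
Proof.
  intros [H0 [H1 [H2 [H3 Hc]]]] [Ea [Ea' _]].
  unfold on_sphere in *.
  assert (Hx : dot V0 V1 = dot V0 V3).
  { unfold sdist in *. rewrite <- Ea' in Ea.
    rewrite <- (cos_acos (dot V0 V1)) by (apply dot_unit_bound; auto).
    rewrite Ea, cos_acos by (apply dot_unit_bound; auto). apply dot_comm. }
  assert (S : det3 V0 V1 V3 * det3 V1 V2 V3 > 0 /\ det3 V0 V1 V2 * det3 V1 V2 V3 > 0 /\
              det3 V0 V3 V1 * det3 V3 V2 V1 > 0 /\ det3 V0 V3 V2 * det3 V3 V2 V1 > 0).
  { pose proof (det_swap23 V0 V3 V1). pose proof (det_swap23 V3 V2 V1).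
    pose proof (det_cyc V1 V2 V3). pose proof (det_cyc V3 V1 V2).
    pose proof (det_swap23 V0 V3 V2). pose proof (det_cyc V0 V2 V3). pose proof (det_cyc V2 V3 V0).
    pose proof (det_swap V1 V0 V3). pose proof (det_swap V1 V0 V2). pose proof (det_swap V2 V1 V0).
    pose proof (det_cyc V0 V1 V2). pose proof (det_cyc V1 V2 V0).
    pose proof (det_swap V2 V1 V3). pose proof (det_swap V3 V2 V0). pose proof (det_swap V3 V2 V1).
    pose proof (det_cyc V3 V0 V1). pose proof (det_cyc V0 V1 V3).
    destruct Hc as [[? [? [? [? [? [? [? ?]]]]]]] | [? [? [? [? [? [? [? ?]]]]]]]];
      repeat split; nra. }
  destruct S as [S1 [S2 [S3 S4]]].
  unfold alpha, beta, gamma. split.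
  - apply M; auto.
  - rewrite (sangle_sym V0 V1 V3), (sangle_sym V3 V2 V0). apply M; auto.
Qed.
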